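(* Let $\Gamma=\mathsf{PSL}_2(\mathbb{Z})=\langle U,S\mid U^3,S^2\rangle$, with $U$ of order $3$ and $S$ of order $2$. Let $\mathcal{W}$ be the set of nonempty words in the alphabet $\{U,S\}$ that are equal to the identity in $\Gamma$ and contain no factor $SS$. Below, $B$ denotes an arbitrary nonempty word over $\{U,S\}$, and for $n,m\ge 0$ each function counts the words in $\mathcal{W}$ having exactly $n$ letters $U$ and $m$ letters $S$ and having the indicated form: - $a(n,m)$: words of the form $SUBUS$; - $b(n,m)$: words of the form $U^\alpha SBSU^\beta$ with $\alpha,\beta>0$, $\alpha+\beta\equiv0\pmod 3$, or of the form $U^\gamma$ with $\gamma>0$, $\gamma\equiv 0\pmod 3$; - $c(n,m)$: words of the form $U^\alpha SBS$ or $SBSU^\alpha$ with $\alpha>0$, $\alpha\equiv0\pmod3$; - $d(n,m)$: words of the form $U^\alpha SBSU^\beta$ with $\alpha,\beta>0$, $\alpha+\beta\equiv 2\pmod 3$; - $e(n,m)$: words of the form $U^\alpha SBSU^\beta$ with $\alpha,\beta>0$, $\alpha+\beta\equiv1\pmod3$; - $f(n,m)$: words of the form $SBSU^\alpha$ or $U^\alpha SBS$ with $\alpha\equiv1\pmod3$; - $g(n,m)$: words of the form $SBSU^\alpha$ or $U^\alpha SBS$ with $\alpha\equiv2\pmod3$; - $\mathfrak d(n,m)$: words of the form $USBSU$; - $\mathfrak f(n,m)$: words of the form $SBSU$. All these functions are taken to be $0$ if an argument is negative. Then for all $n,m\ge0$: $$a(3n,2m)=b(3n,2m-2)+d(3n,2m-2)+e(3n,2m-2),$$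 $$b(3n,2m)=\sum_{k\ge1}(3k-1)\,a(3n-3k,2m)\ \text{ for } m\ge1,\qquad b(3n,0)=1\ \text{ for } n>0,$$ $$c(3n,2m)=2\sum_{k\ge1}a(3n-3k,2m),$$ $$d(3n,2m)=\sum_{k\ge0}(3k+1)\,\mathfrak d(3n-3k,2m),$$ $$e(3n,2m)=\sum_{k\ge1}3k\,\mathfrak f(3n-3k,2m),$$ $$f(3n,2m)=2\sum_{k\ge0}\mathfrak f(3n-3k,2m),$$ $$g(3n,2m)=2\sum_{k\ge0}\mathfrak d(3n-3k,2m).$$
   Context: Words are finite sequences over $\{U,S\}$ read as products in $\Gamma$; exponents $U^\alpha$ denote $\alpha$ consecutive letters $U$. *)

(* Defs.v *)
From HB Require Import structures.
From mathcomp Require Import all_boot all_order all_algebra zify.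
Set Implicit Arguments. Unset Strict Implicit. Unset Printing Implicit Defensive.
Import Order.TTheory GRing.Theory Num.Theory.

Inductive letter := LU | LS.

Definition letter_to_bool (l : letter) : bool := if l is LU then true else false.
Definition bool_to_letter (b : bool) : letter := if b then LU else LS.
Lemma letter_to_boolK : cancel letter_to_bool bool_to_letter.
Proof. by case. Qed.
HB.instance Definition _ := Finite.copy letter (can_type letter_to_boolK).

Definition word := seq letter.

(** PSL_2(Z) realised through SL_2(Z): U = [[0,-1],[1,1]] (order 3 in PSL_2),
    S = [[0,-1],[1,0]] (order 2 in PSL_2).  A word is the identity of
    Gamma = PSL_2(Z) iff its matrix product is +I or -I. *)
Local Open Scope ring_scope.
Definition Umx : 'M[int]_2 :=
  \matrix_(i < 2, j < 2) (if (i : nat) == 0%N then (if (j : nat) == 0%N then 0 else -1) else 1).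
Definition Smx : 'M[int]_2 :=
  \matrix_(i < 2, j < 2) (if i == j then 0 else if (i : nat) == 0%N then -1 else 1).
Definition letter_mx (l : letter) : 'M[int]_2 := if l is LU then Umx else Smx.
Definition eval_word (w : word) : 'M[int]_2 := foldr (fun l M => letter_mx l *m M) 1%:M w.
Definition is_identity (w : word) : bool := (eval_word w == 1%:M) || (eval_word w == - 1%:M).
Local Close Scope ring_scope.

Fixpoint noSS (w : word) : bool :=
  match w with
  | LS :: (LS :: _) as w' => false
  | _ :: w' => noSS w'
  | [::] => true
  end.

Definition inW (w : word) : bool := [&& w != [::], is_identity w & noSS w].

Definition Upow (k : nat) : word := nseq k LU.

(** [framed p q w] : w = p ++ B ++ q for some NONEMPTY word B (see framedP). *)
Definition framed (p q w : word) : bool :=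
  [&& size p + size q < size w, take (size p) w == p & drop (size w - size q) w == q].

Lemma framedP p q w :
  reflect (exists B : word, B <> [::] /\ w = p ++ B ++ q) (framed p q w).
Proof.
apply: (iffP idP).
- case/and3P=> hs /eqP hp /eqP hq.
  exists (take (size w - size q - size p) (drop (size p) w)); split.
    move=> h; have := congr1 size h; rewrite size_take size_drop.
    by case: ifP => _ /eqP; rewrite ?subn_eq0 /=; lia.
  rewrite -{1}(cat_take_drop (size p) w) hp; congr (_ ++ _).
  rewrite -{1}(cat_take_drop (size w - size q - size p) (drop (size p) w)).
  congr (_ ++ _); rewrite drop_drop -[in RHS]hq; congr drop; lia.
- case=> B [hB ->]; apply/and3P; split.
  + by rewrite !size_cat; case: B hB => // _ B _ /=; lia.
  + by rewrite take_size_cat.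
  + rewrite catA drop_size_cat // !size_cat; lia.
Qed.

Definition form_a w := framed [:: LS; LU] [:: LU; LS] w.
Definition form_UBU (cond : nat -> nat -> bool) w :=
  [exists a : 'I_(size w).+1, [exists b : 'I_(size w).+1,
     [&& 0 < a, 0 < b, cond a b & framed (Upow a ++ [:: LS]) (LS :: Upow b) w]]].
Definition form_b w :=
  form_UBU (fun a b => (a + b) %% 3 == 0) w
  || [exists g : 'I_(size w).+1, [&& 0 < g, g %% 3 == 0 & w == Upow g]].
Definition form_one_side (cond : nat -> bool) w :=
  [exists a : 'I_(size w).+1,
     cond a && (framed (Upow a ++ [:: LS]) [:: LS] w || framed [:: LS] (LS :: Upow a) w)].
Definition form_c w := form_one_side (fun a => (0 < a) && (a %% 3 == 0)) w.
Definition form_d w := form_UBU (fun a b => (a + b) %% 3 == 2) w.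
Definition form_e w := form_UBU (fun a b => (a + b) %% 3 == 1) w.
Definition form_f w := form_one_side (fun a => a %% 3 == 1) w.
Definition form_g w := form_one_side (fun a => a %% 3 == 2) w.
Definition form_frak_d w := framed [:: LU; LS] [:: LS; LU] w.
Definition form_frak_f w := framed [:: LS] [:: LS; LU] w.

Definition cnt (form : word -> bool) (n m : nat) : nat :=
  #|[set t : (n + m).-tuple letter |
      [&& inW t, count (pred1 LU) t == n, count (pred1 LS) t == m & form t]]|.

Definition ext (f : nat -> nat -> nat) (i j : int) : nat :=
  match i, j with Posz n, Posz m => f n m | _, _ => 0 end.

Definition a_ := ext (cnt form_a).
Definition b_ := ext (cnt form_b).
Definition c_ := ext (cnt form_c).
Definition d_ := ext (cnt form_d).
Definition e_ := ext (cnt form_e).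
Definition f_ := ext (cnt form_f).
Definition g_ := ext (cnt form_g).
Definition fd_ := ext (cnt form_frak_d).
Definition ff_ := ext (cnt form_frak_f).

(* Main.v *)
Require Import Defs.
From HB Require Import structures.
From mathcomp Require Import all_boot all_order all_algebra zify.
Import Order.TTheory GRing.Theory Num.Theory.
Set Implicit Arguments. Unset Strict Implicit. Unset Printing Implicit Defensive.

Definition cU (w : word) := count (pred1 LU) w.
Definition cS (w : word) := count (pred1 LS) w.

Lemma size_cnt w : size w = cU w + cS w.
Proof. rewrite /cU /cS; elim: w => //= -[] w ->; rewrite /=; lia. Qed.

Definition allw L : seq word := map val (enum {: L.-tuple letter}).

Lemma allw_uniq L : uniq (allw L).
Proof. by rewrite map_inj_uniq ?enum_uniq //; apply: val_inj. Qed.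

Lemma mem_allw L w : (w \in allw L) = (size w == L).
Proof.
apply/idP/idP.
- by case/mapP => t _ ->; rewrite size_tuple.
- move=> /eqP H; apply/mapP; exists (Tuple (introT eqP H)) => //; by rewrite mem_enum.
Qed.

Definition Pr (form : word -> bool) n m (w : word) :=
  [&& inW w, cU w == n, cS w == m & form w].

Lemma cntE form n m : cnt form n m = count (Pr form n m) (allw (n + m)).
Proof.
rewrite /cnt /allw count_map cardE /enum_mem count_filter size_filter.
by apply: eq_count => t; rewrite !inE andbT.
Qed.

Lemma Pr_size form n m w : Pr form n m w -> size w = n + m.
Proof. by case/and4P => _ /eqP <- /eqP <- _; rewrite size_cnt. Qed.

Lemma count_bij (P Q : pred word) L1 L2 (h : word -> word) :
  (forall w, P w -> size w = L1) -> (forall v, Q v -> size v = L2) ->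
  (forall v1 v2, Q v1 -> Q v2 -> h v1 = h v2 -> v1 = v2) ->
  (forall v, Q v -> P (h v)) -> (forall w, P w -> exists2 v, Q v & w = h v) ->
  count P (allw L1) = count Q (allw L2).
Proof.
move=> sP sQ hI hPQ hQP; rewrite -!size_filter.
have pe : perm_eq (map h (filter Q (allw L2))) (filter P (allw L1)).
  apply: uniq_perm.
  - rewrite map_inj_in_uniq ?filter_uniq ?allw_uniq //.
    by move=> x y; rewrite !mem_filter => /andP[qx _] /andP[qy _]; apply: hI.
  - by rewrite filter_uniq ?allw_uniq.
  move=> w; apply/idP/idP.
  - case/mapP=> v; rewrite mem_filter => /andP[qv _] ->.
    by rewrite mem_filter (hPQ _ qv) mem_allw /=; apply/eqP; apply: sP; apply: hPQ.
  - rewrite mem_filter => /andP[pw _]; case: (hQP w pw) => v qv ->.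
    by apply/mapP; exists v => //; rewrite mem_filter qv mem_allw /=; apply/eqP; apply: sQ.
by rewrite -(perm_size pe) size_map.
Qed.

Lemma count_part (P : pred word) (f : word -> nat) lo hi s :
  (forall w, P w -> lo <= f w < hi) ->
  count P s = \sum_(lo <= k < hi) count (fun w => P w && (f w == k)) s.
Proof.
move=> hf; elim: s => [|x s IH] /=; first by rewrite big1.
rewrite big_split /= -IH; congr (_ + _).
case Px: (P x) => /=; last by rewrite big1.
rewrite (bigD1_seq (f x)) ?mem_index_iota ?hf ?iota_uniq //= eqxx big1 //.
by move=> k /negbTE; rewrite eq_sym => ->.
Qed.

Lemma count_split (P q : pred word) s :
  count P s = count (fun w => P w && q w) s + count (fun w => P w && ~~ q w) s.
Proof. elim: s => //= x s ->; case: (P x); case: (q x) => /=; lia. Qed.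

Lemma count_0 (P : pred word) s : (forall w, ~~ P w) -> count P s = 0.
Proof. by move=> h; elim: s => //= x s ->; rewrite (negbTE (h x)). Qed.

Lemma eval_cons l x : eval_word (l :: x) = (letter_mx l *m eval_word x)%R.
Proof. by []. Qed.

Lemma eval_cat x y : eval_word (x ++ y) = (eval_word x *m eval_word y)%R.
Proof. elim: x => [|l x IH] /=; first by rewrite mul1mx. by rewrite IH mulmxA. Qed.

Ltac mx2 := apply/matrixP => -[[|[|//]] ?] -[[|[|//]] ?]; rewrite !(mxE, big_ord_recl, big_ord0) /=.

Lemma eval_U3 : eval_word (Upow 3) = (- 1%:M)%R.
Proof.
rewrite /= mulmx1 /Upow /=.
mx2.
all: by [].
Qed.

Lemma eval_SS : eval_word [:: LS; LS] = (- 1%:M)%R.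
Proof. rewrite /= mulmx1; mx2; by []. Qed.

Lemma is_idE w : is_identity w = (eval_word w == 1%:M)%R || (eval_word w == - 1%:M)%R.
Proof. by []. Qed.

Lemma negE (M : 'M[int]_2) : ((- M == 1%:M) || (- M == - 1%:M))%R = ((M == 1%:M) || (M == - 1%:M))%R.
Proof. by rewrite eqr_oppLR eqr_opp orbC. Qed.

Lemma rot_id_imp x y : is_identity (x ++ y) -> is_identity (y ++ x).
Proof.
rewrite !is_idE !eval_cat => /orP[/eqP h|/eqP h].
  by rewrite (mulmx1C h) eqxx.
have h' : (eval_word x *m (- eval_word y) = 1%:M)%R by rewrite mulmxN h opprK.
by have := mulmx1C h'; rewrite mulNmx => <-; rewrite opprK eqxx orbT.
Qed.

Lemma is_id_rot x y : is_identity (x ++ y) = is_identity (y ++ x).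
Proof. by apply/idP/idP; apply: rot_id_imp. Qed.

Lemma is_id_U3 x : is_identity (Upow 3 ++ x) = is_identity x.
Proof. by rewrite !is_idE eval_cat eval_U3 mulNmx mul1mx negE. Qed.

Lemma is_id_U3k k x : is_identity (Upow (3 * k) ++ x) = is_identity x.
Proof.
elim: k => [//|k IH]; by rewrite mulnS /Upow nseqD -catA is_id_U3.
Qed.

Lemma is_id_SS x : is_identity (x ++ [:: LS; LS]) = is_identity x.
Proof. by rewrite !is_idE eval_cat eval_SS mulmxN mulmx1 negE. Qed.

Lemma is_id_mod a x : is_identity (Upow a ++ x) = is_identity (Upow (a %% 3) ++ x).
Proof. by rewrite {1}(divn_eq a 3) /Upow nseqD -catA mulnC is_id_U3k. Qed.

Lemma is_id_rotn n s : is_identity (rot n s) = is_identity s.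
Proof. by rewrite /rot is_id_rot cat_take_drop. Qed.

Lemma is_id_rotrn n s : is_identity (rotr n s) = is_identity s.
Proof. by rewrite /rotr is_id_rotn. Qed.

Lemma nid_SUS : is_identity [:: LS; LU; LS] = false.
Proof.
apply/negbTE/negP; rewrite is_idE => /orP[]/eqP/matrixP/(_ ord_max ord_max);
  rewrite /= !(mxE, big_ord_recl, big_ord0) /=; by [].
Qed.

Lemma nid_SUUS : is_identity [:: LS; LU; LU; LS] = false.
Proof.
apply/negbTE/negP; rewrite is_idE => /orP[]/eqP/matrixP/(_ ord0 ord0);
  rewrite /= !(mxE, big_ord_recl, big_ord0) /=; by [].
Qed.

Lemma nid_U : is_identity [:: LU] = false.
Proof.
apply/negbTE/negP; rewrite is_idE => /orP[]/eqP/matrixP/(_ ord0 ord0);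
  rewrite /= !(mxE, big_ord_recl, big_ord0) /=; by [].
Qed.

Lemma nid_UU : is_identity [:: LU; LU] = false.
Proof.
apply/negbTE/negP; rewrite is_idE => /orP[]/eqP/matrixP/(_ ord_max ord_max);
  rewrite /= !(mxE, big_ord_recl, big_ord0) /=; by [].
Qed.

Lemma id_nil : is_identity [::].
Proof. by rewrite is_idE /= eqxx. Qed.

Lemma UpowD a b : Upow (a + b) = Upow a ++ Upow b.
Proof. exact: nseqD. Qed.

Lemma UpowSr a : Upow a.+1 = Upow a ++ [:: LU].
Proof. by rewrite -addn1 UpowD. Qed.

Lemma noSS_catU x y : noSS (x ++ LU :: y) = noSS x && noSS y.
Proof.
elim: x => [//|[] x IH] /=; first exact: IH.
case: x IH => [|[] x] IH //=.
Qed.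

Lemma noSS_Upow_cat a x : noSS (Upow a ++ x) = noSS x.
Proof. by elim: a. Qed.

Lemma noSS_Upow a : noSS (Upow a).
Proof. by elim: a. Qed.

Lemma noSS_cat_Upow x b : noSS (x ++ Upow b) = noSS x.
Proof.
case: b => [|b]; first by rewrite cats0.
by change (Upow b.+1) with (LU :: Upow b); rewrite noSS_catU noSS_Upow andbT.
Qed.

Lemma noSS_SS x y : noSS (x ++ LS :: LS :: y) = false.
Proof. elim: x => [//|[] x IH] /=; first exact: IH. by case: x IH => [|[] x] //=. Qed.

Lemma cU_Upow a : cU (Upow a) = a.
Proof. by rewrite /cU count_nseq /= mul1n. Qed.
Lemma cS_Upow a : cS (Upow a) = 0.
Proof. by rewrite /cS count_nseq /= mul0n. Qed.

Definition lead (w : word) := find (pred1 LS) w.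
Definition trail (w : word) := lead (rev w).

Lemma lead_U a x : lead (Upow a ++ LS :: x) = a.
Proof. by elim: a => //= a ->. Qed.

Lemma lead_pure a : lead (Upow a) = a.
Proof. by elim: a => //= a ->. Qed.

Lemma trail_pure a : trail (Upow a) = a.
Proof. by rewrite /trail rev_nseq lead_pure. Qed.

Lemma trail_U x b : trail (x ++ LS :: Upow b) = b.
Proof.
by rewrite /trail rev_cat rev_cons rev_nseq -cats1 -catA lead_U.
Qed.

Lemma splitS w : LS \in w -> exists a x, w = Upow a ++ LS :: x.
Proof.
elim: w => [//|[] w IH] /=.
- rewrite in_cons /= => /IH [a [x ->]]; by exists a.+1, x.
- by move=> _; exists 0, w.
Qed.

Lemma splitS_r w : LS \in w -> exists y b, w = y ++ LS :: Upow b.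
Proof.
rewrite -mem_rev => /splitS [b [x e]]; exists (rev x), b.
by rewrite -[w]revK e rev_cat rev_cons rev_nseq cat_rcons.
Qed.

Lemma noS w : LS \notin w -> w = Upow (size w).
Proof.
elim: w => [//|l w IH]; rewrite in_cons; case: l => //= h.
by rewrite -IH.
Qed.

Lemma inS_cS w : (LS \in w) = (0 < cS w).
Proof. by rewrite /cS -has_pred1 has_count. Qed.

Lemma decomp w : 1 < cS w -> noSS w ->
  exists a b B, B <> [::] /\ w = Upow a ++ LS :: B ++ LS :: Upow b.
Proof.
move=> h2 hn.
have : LS \in w by rewrite inS_cS; lia.
case/splitS => a [x ex].
have : LS \in x.
  by rewrite inS_cS; move: h2; rewrite ex /cS count_cat count_nseq /= ; lia.
case/splitS_r => y [b ey].
exists a, b, y; split => [ey0|]; last by rewrite ex ey.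
by move: hn; rewrite ex ey ey0 /= noSS_Upow_cat.
Qed.

Lemma a_core B : B <> [::] -> noSS (LS :: B ++ [:: LS]) ->
  is_identity (LS :: B ++ [:: LS]) -> exists2 B', B' <> [::] & B = LU :: B' ++ [:: LU].
Proof.
case: B => [//|[] B1] _ /=.
- case/lastP: B1 => [|B2 z]; first by rewrite nid_SUS.
  case: z.
  + case: B2 => [|l B2]; first by rewrite nid_SUUS.
    by move=> _ _; exists (l :: B2) => //; rewrite cats1.
  + by rewrite -cats1 -catA noSS_SS.
- by [].
Qed.

Lemma size_Upow a : size (Upow a) = a.
Proof. exact: size_nseq. Qed.

Lemma form_UBU_E cond w : form_UBU cond w -> exists a b B,
  [/\ 0 < a, 0 < b, cond a b, B <> [::] & w = Upow a ++ LS :: B ++ LS :: Upow b].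
Proof.
case/existsP => a /existsP [b /and4P [ha hb hc /framedP [B [hB e]]]].
by exists a, b, B; split => //; rewrite -catA /= in e.
Qed.

Lemma form_UBU_I (cond : nat -> nat -> bool) w a b B : 0 < a -> 0 < b -> cond a b -> B <> [::] ->
  w = Upow a ++ LS :: B ++ LS :: Upow b -> form_UBU cond w.
Proof.
move=> ha hb hc hB e.
have sa : a < (size w).+1 by rewrite e size_cat size_Upow /= size_cat /= size_Upow; lia.
have sb : b < (size w).+1 by rewrite e size_cat size_Upow /= size_cat /= size_Upow; lia.
apply/existsP; exists (Ordinal sa); apply/existsP; exists (Ordinal sb).
rewrite /= ha hb hc /=; apply/framedP; exists B; split => //; by rewrite e -catA.
Qed.

Lemma form_b_pure_E w : [exists g : 'I_(size w).+1, [&& 0 < g, g %% 3 == 0 & w == Upow g]] ->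
  exists g, [/\ 0 < g, g %% 3 = 0 & w = Upow g].
Proof. by case/existsP => g /and3P [h1 /eqP h2 /eqP h3]; exists g; split. Qed.

Lemma form_b_pure_I w g : 0 < g -> g %% 3 = 0 -> w = Upow g ->
  [exists g : 'I_(size w).+1, [&& 0 < g, g %% 3 == 0 & w == Upow g]].
Proof.
move=> h1 h2 e; have sg : g < (size w).+1 by rewrite e size_Upow.
apply/existsP; exists (Ordinal sg); rewrite /= h1 h2 /=; exact/eqP.
Qed.

Lemma form_one_E cond w : form_one_side cond w -> exists a B, cond a /\ B <> [::] /\
  (w = Upow a ++ LS :: B ++ [:: LS] \/ w = LS :: B ++ LS :: Upow a).
Proof.
case/existsP => a /andP [hc /orP [/framedP [B [hB e]]|/framedP [B [hB e]]]];
  exists a, B; (split; [done|split; [done|]]).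
- by left; rewrite -catA /= in e.
- by right.
Qed.

Lemma form_one_I1 (cond : nat -> bool) w a B : cond a -> B <> [::] ->
  w = Upow a ++ LS :: B ++ [:: LS] -> form_one_side cond w.
Proof.
move=> hc hB e; have sa : a < (size w).+1 by rewrite e size_cat size_Upow; lia.
apply/existsP; exists (Ordinal sa); rewrite /= hc /=; apply/orP; left.
by apply/framedP; exists B; split => //; rewrite e -catA.
Qed.

Lemma form_one_I2 (cond : nat -> bool) w a B : cond a -> B <> [::] ->
  w = LS :: B ++ LS :: Upow a -> form_one_side cond w.
Proof.
move=> hc hB e; have sa : a < (size w).+1 by rewrite e /= size_cat /= size_Upow; lia.
apply/existsP; exists (Ordinal sa); rewrite /= hc /=; apply/orP; right.
by apply/framedP; exists B; split => //; rewrite e.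
Qed.

Lemma form_a_E w : form_a w -> exists2 B, B <> [::] & w = LS :: LU :: B ++ [:: LU; LS].
Proof. by case/framedP => B [hB e]; exists B. Qed.
Lemma form_a_I w B : B <> [::] -> w = LS :: LU :: B ++ [:: LU; LS] -> form_a w.
Proof. by move=> hB e; apply/framedP; exists B. Qed.
Lemma form_fd_E w : form_frak_d w -> exists2 B, B <> [::] & w = LU :: LS :: B ++ [:: LS; LU].
Proof. by case/framedP => B [hB e]; exists B. Qed.
Lemma form_fd_I w B : B <> [::] -> w = LU :: LS :: B ++ [:: LS; LU] -> form_frak_d w.
Proof. by move=> hB e; apply/framedP; exists B. Qed.
Lemma form_ff_E w : form_frak_f w -> exists2 B, B <> [::] & w = LS :: B ++ [:: LS; LU].
Proof. by case/framedP => B [hB e]; exists B. Qed.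
Lemma form_ff_I w B : B <> [::] -> w = LS :: B ++ [:: LS; LU] -> form_frak_f w.
Proof. by move=> hB e; apply/framedP; exists B. Qed.

Definition core (B : word) : word := LS :: B ++ [:: LS].

Lemma UBUE a B b : Upow a ++ LS :: B ++ LS :: Upow b = Upow a ++ core B ++ Upow b.
Proof. by rewrite /core /= -catA. Qed.
Lemma oneLE a B : Upow a ++ LS :: B ++ [:: LS] = Upow a ++ core B.
Proof. by []. Qed.
Lemma oneRE a B : LS :: B ++ LS :: Upow a = core B ++ Upow a.
Proof. by rewrite /core /= -catA. Qed.
Lemma aE B : LS :: LU :: B ++ [:: LU; LS] = core (LU :: B ++ [:: LU]).
Proof. by rewrite /core /= -catA. Qed.
Lemma ffE B : LS :: B ++ [:: LS; LU] = core B ++ [:: LU].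
Proof. by rewrite /core /= -catA. Qed.
Lemma fdE B : LU :: LS :: B ++ [:: LS; LU] = LU :: core B ++ [:: LU].
Proof. by rewrite /core /= -catA. Qed.

Lemma noSS_sand a x b : noSS (Upow a ++ x ++ Upow b) = noSS x.
Proof. by rewrite noSS_Upow_cat noSS_cat_Upow. Qed.
Lemma noSS_U x : noSS (x ++ [:: LU]) = noSS x.
Proof. by rewrite (noSS_cat_Upow x 1). Qed.

Lemma is_id_sand a x b : is_identity (Upow a ++ x ++ Upow b) = is_identity (Upow (a + b) ++ x).
Proof. by rewrite catA is_id_rot catA -UpowD addnC. Qed.

Lemma cU_cat x y : cU (x ++ y) = cU x + cU y.
Proof. exact: count_cat. Qed.
Lemma cS_cat x y : cS (x ++ y) = cS x + cS y.
Proof. exact: count_cat. Qed.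

Lemma catl_inj (p x y : word) : p ++ x = p ++ y -> x = y.
Proof. by move/(congr1 (drop (size p))); rewrite !drop_size_cat. Qed.
Lemma catr_inj (p x y : word) : x ++ p = y ++ p -> x = y.
Proof. by move/(congr1 rev); rewrite !rev_cat => /catl_inj /(congr1 rev); rewrite !revK. Qed.

Lemma PrE (form : word -> bool) n m w : Pr form n m w ->
  [/\ is_identity w, noSS w, cU w = n, cS w = m & form w].
Proof. by case/and4P => /and3P [_ h1 h2] /eqP h3 /eqP h4 h5. Qed.

Lemma PrI (form : word -> bool) n m w : w <> [::] -> is_identity w -> noSS w -> cU w = n -> cS w = m ->
  form w -> Pr form n m w.
Proof.
move=> h0 h1 h2 h3 h4 h5; rewrite /Pr /inW h1 h2 h3 h4 h5 !eqxx !andbT.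
by apply/eqP.
Qed.

Lemma core_nil B : core B <> [::]. Proof. by []. Qed.

Lemma cS_core B : cS (core B) = (cS B).+2.
Proof. rewrite /core /cS /= count_cat /=; lia. Qed.
Lemma cU_core B : cU (core B) = cU B.
Proof. rewrite /core /cU /= count_cat /=; lia. Qed.

Lemma lead_sand a B b : lead (Upow a ++ core B ++ Upow b) = a.
Proof. by rewrite -UBUE lead_U. Qed.
Lemma trail_sand a B b : trail (Upow a ++ core B ++ Upow b) = b.
Proof. by rewrite -UBUE -cat_cons catA trail_U. Qed.
Lemma cU_sand a x b : cU (Upow a ++ x ++ Upow b) = a + cU x + b.
Proof. by rewrite !cU_cat !cU_Upow addnA. Qed.
Lemma cS_sand a x b : cS (Upow a ++ x ++ Upow b) = cS x.
Proof. by rewrite !cS_cat !cS_Upow addn0. Qed.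
Lemma sand_nil a x b : x <> [::] -> Upow a ++ x ++ Upow b <> [::].
Proof. by case: x => // l x _; case: a. Qed.

Lemma UBU_of (cond : nat -> nat -> bool) w : form_UBU cond w ->
  exists a b B, [/\ 0 < a, 0 < b, cond a b, B <> [::] & w = Upow a ++ core B ++ Upow b].
Proof.
case/form_UBU_E => a [b [B [h1 h2 h3 h4 e]]]; exists a, b, B; split => //.
by rewrite e UBUE.
Qed.

Lemma b_sum n m : 0 < m -> cnt form_b (3 * n) (2 * m) =
  \sum_(1 <= k < n.+1) (3 * k - 1) * cnt form_a (3 * n - 3 * k) (2 * m).
Proof.
move=> m0.
have UBUb : forall w, Pr form_b (3 * n) (2 * m) w -> exists a b B,
   [/\ 0 < a, 0 < b, (a + b) %% 3 == 0, B <> [::] & w = Upow a ++ core B ++ Upow b].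
  move=> w /[dup] Pw /PrE [_ _ _ hcs /orP [/UBU_of //|/form_b_pure_E [g [_ _ e]]]].
  by move: hcs; rewrite e cS_Upow; lia.
rewrite cntE (@count_part _ (fun w => (lead w + trail w) %/ 3) 1 n.+1); last first.
  move=> w /[dup] Pw /UBUb [a [b [B [ha hb hc hB ew]]]].
  case/PrE: Pw => _ _ hcu _ _.
  move: hcu hc; rewrite ew lead_sand trail_sand cU_sand; lia.
apply: eq_big_nat => k /andP [k1 kn].
rewrite (@count_part _ lead 1 (3 * k)); last first.
  move=> w /andP [/[dup] Pw /UBUb [a [b [B [ha hb hc hB ew]]]]].
  rewrite ew lead_sand trail_sand => /eqP; move: hc; lia.
rewrite (@eq_big_nat _ _ _ _ _ _ (fun _ => cnt form_a (3 * n - 3 * k) (2 * m))).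
  by rewrite sum_nat_const_nat.
move=> al /andP [a1 a2]; rewrite cntE.
apply: (@count_bij _ _ _ _ (fun v => Upow al ++ v ++ Upow (3 * k - al))).
- by move=> w /andP [/andP [/Pr_size]].
- by move=> v /Pr_size.
- by move=> v1 v2 _ _ /catl_inj /catr_inj.
- move=> v /PrE [hid hns hcu hcs /form_a_E [B' hB' ev]].
  set B := LU :: B' ++ [:: LU].
  have ev' : v = core B by rewrite ev aE.
  rewrite ev' lead_sand trail_sand eqxx andbT.
  have e3 : al + (3 * k - al) = 3 * k by lia.
  rewrite e3 mulKn // eqxx andbT.
  apply: PrI.
  + exact: sand_nil.
  + by rewrite is_id_sand e3 is_id_U3k -ev'.
  + by rewrite noSS_sand -ev'.
  + rewrite cU_sand -ev' hcu; lia.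
  + by rewrite cS_sand -ev'.
  + apply/orP; left; apply: (@form_UBU_I _ _ al (3 * k - al) B) => //; first lia.
    * apply/eqP; rewrite e3; lia.
    * by rewrite UBUE.
- move=> w /andP [/andP [/[dup] Pw /UBUb [a [b [B [ha hb hc hB ew]]]] fk] lw].
  move: fk lw; rewrite ew lead_sand trail_sand => /eqP fk /eqP la.
  have eb : b = 3 * k - al by move: hc; lia.
  exists (core B); last by rewrite la eb.
  case/PrE: Pw => hid hns hcu hcs _.
  have e3 : a + b = 3 * k by move: hc; lia.
  rewrite ew is_id_sand e3 is_id_U3k in hid.
  rewrite ew noSS_sand in hns.
  rewrite ew cU_sand in hcu; rewrite ew cS_sand in hcs.
  apply: PrI => //; first lia.
  have [B' hB' eB] := a_core hB hns hid.
  by apply: (@form_a_I _ B') => //; rewrite eB aE.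
Qed.

Lemma shift2 a x b : Upow a ++ (LU :: x ++ [:: LU]) ++ Upow b = Upow a.+1 ++ x ++ Upow b.+1.
Proof. by rewrite UpowSr /= -!catA. Qed.
Lemma shift1 a x b : Upow a ++ (x ++ [:: LU]) ++ Upow b = Upow a ++ x ++ Upow b.+1.
Proof. by rewrite -catA. Qed.

Lemma d_sum n m : cnt form_d (3 * n) (2 * m) =
  \sum_(0 <= k < n.+1) (3 * k + 1) * cnt form_frak_d (3 * n - 3 * k) (2 * m).
Proof.
have UBUb : forall w, Pr form_d (3 * n) (2 * m) w -> exists a b B,
   [/\ 0 < a, 0 < b, (a + b) %% 3 == 2, B <> [::] & w = Upow a ++ core B ++ Upow b].
  by move=> w /PrE [_ _ _ _ /UBU_of].
rewrite cntE (@count_part _ (fun w => (lead w + trail w) %/ 3) 0 n.+1); last first.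
  move=> w /[dup] Pw /UBUb [a [b [B [ha hb hc hB ew]]]].
  case/PrE: Pw => _ _ hcu _ _.
  move: hcu hc; rewrite ew lead_sand trail_sand cU_sand; lia.
apply: eq_big_nat => k /andP [k1 kn].
rewrite (@count_part _ lead 1 (3 * k + 2)); last first.
  move=> w /andP [/[dup] Pw /UBUb [a [b [B [ha hb hc hB ew]]]]].
  rewrite ew lead_sand trail_sand => /eqP; move: hc; lia.
rewrite (@eq_big_nat _ _ _ _ _ _ (fun _ => cnt form_frak_d (3 * n - 3 * k) (2 * m))).
  by rewrite sum_nat_const_nat; congr (_ * _); lia.
move=> al /andP [a1 a2]; rewrite cntE.
have hvE : forall B, Upow (al - 1) ++ (LU :: core B ++ [:: LU]) ++ Upow (3 * k + 1 - al)
    = Upow al ++ core B ++ Upow (3 * k + 2 - al).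
  move=> B; rewrite shift2; congr (Upow _ ++ _ ++ Upow _); lia.
have e3 : al - 1 + (3 * k + 1 - al) = 3 * k by lia.
apply: (@count_bij _ _ _ _ (fun v => Upow (al - 1) ++ v ++ Upow (3 * k + 1 - al))).
- by move=> w /andP [/andP [/Pr_size]].
- by move=> v /Pr_size.
- by move=> v1 v2 _ _ /catl_inj /catr_inj.
- move=> v /PrE [hid hns hcu hcs /form_fd_E [B hB ev]].
  have ev' : v = LU :: core B ++ [:: LU] by rewrite ev fdE.
  apply/andP; split; [apply/andP; split|].
  + apply: PrI.
    * by apply: sand_nil; rewrite ev.
    * by rewrite is_id_sand e3 is_id_U3k.
    * by rewrite noSS_sand.
    * rewrite cU_sand hcu; lia.
    * by rewrite cS_sand.
    * rewrite ev' hvE; apply: (@form_UBU_I _ _ al (3 * k + 2 - al) B);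
        [done|lia|apply/eqP; lia|done|by rewrite UBUE].
  + rewrite ev' hvE lead_sand trail_sand; apply/eqP; lia.
  + by rewrite ev' hvE lead_sand.
- move=> w /andP [/andP [/[dup] Pw /UBUb [a [b [B [ha hb hc hB ew]]]] fk] lw].
  move: fk lw; rewrite ew lead_sand trail_sand => /eqP fk /eqP la.
  have ew' : w = Upow (al - 1) ++ (LU :: core B ++ [:: LU]) ++ Upow (3 * k + 1 - al).
    by rewrite hvE ew la; congr (_ ++ _ ++ Upow _); move: hc; lia.
  exists (LU :: core B ++ [:: LU]); last by rewrite -ew; exact: ew'.
  case/PrE: Pw => hid hns hcu hcs _.
  rewrite ew' is_id_sand e3 is_id_U3k in hid.
  rewrite ew' noSS_sand in hns.
  rewrite ew' cU_sand in hcu; rewrite ew' cS_sand in hcs.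
  apply: PrI => //; first lia.
  by apply: (@form_fd_I _ B) => //; rewrite fdE.
Qed.

Lemma e_sum n m : cnt form_e (3 * n) (2 * m) =
  \sum_(1 <= k < n.+1) (3 * k) * cnt form_frak_f (3 * n - 3 * k) (2 * m).
Proof.
have UBUb : forall w, Pr form_e (3 * n) (2 * m) w -> exists a b B,
   [/\ 0 < a, 0 < b, (a + b) %% 3 == 1, B <> [::] & w = Upow a ++ core B ++ Upow b].
  by move=> w /PrE [_ _ _ _ /UBU_of].
rewrite cntE (@count_part _ (fun w => (lead w + trail w) %/ 3) 1 n.+1); last first.
  move=> w /[dup] Pw /UBUb [a [b [B [ha hb hc hB ew]]]].
  case/PrE: Pw => _ _ hcu _ _.
  move: hcu hc; rewrite ew lead_sand trail_sand cU_sand; lia.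
apply: eq_big_nat => k /andP [k1 kn].
rewrite (@count_part _ lead 1 (3 * k + 1)); last first.
  move=> w /andP [/[dup] Pw /UBUb [a [b [B [ha hb hc hB ew]]]]].
  rewrite ew lead_sand trail_sand => /eqP; move: hc; lia.
rewrite (@eq_big_nat _ _ _ _ _ _ (fun _ => cnt form_frak_f (3 * n - 3 * k) (2 * m))).
  by rewrite sum_nat_const_nat; congr (_ * _); lia.
move=> al /andP [a1 a2]; rewrite cntE.
have hvE : forall B, Upow al ++ (core B ++ [:: LU]) ++ Upow (3 * k - al)
    = Upow al ++ core B ++ Upow (3 * k + 1 - al).
  move=> B; rewrite shift1; congr (Upow _ ++ _ ++ Upow _); lia.
have e3 : al + (3 * k - al) = 3 * k by lia.
apply: (@count_bij _ _ _ _ (fun v => Upow al ++ v ++ Upow (3 * k - al))).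
- by move=> w /andP [/andP [/Pr_size]].
- by move=> v /Pr_size.
- by move=> v1 v2 _ _ /catl_inj /catr_inj.
- move=> v /PrE [hid hns hcu hcs /form_ff_E [B hB ev]].
  have ev' : v = core B ++ [:: LU] by rewrite ev ffE.
  apply/andP; split; [apply/andP; split|].
  + apply: PrI.
    * by apply: sand_nil; rewrite ev.
    * by rewrite is_id_sand e3 is_id_U3k.
    * by rewrite noSS_sand.
    * rewrite cU_sand hcu; lia.
    * by rewrite cS_sand.
    * rewrite ev' hvE; apply: (@form_UBU_I _ _ al (3 * k + 1 - al) B);
        [done|lia|apply/eqP; lia|done|by rewrite UBUE].
  + rewrite ev' hvE lead_sand trail_sand; apply/eqP; lia.
  + by rewrite ev' hvE lead_sand.
- move=> w /andP [/andP [/[dup] Pw /UBUb [a [b [B [ha hb hc hB ew]]]] fk] lw].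
  move: fk lw; rewrite ew lead_sand trail_sand => /eqP fk /eqP la.
  have ew' : w = Upow al ++ (core B ++ [:: LU]) ++ Upow (3 * k - al).
    by rewrite hvE ew la; congr (_ ++ _ ++ Upow _); move: hc; lia.
  exists (core B ++ [:: LU]); last by rewrite -ew; exact: ew'.
  case/PrE: Pw => hid hns hcu hcs _.
  rewrite ew' is_id_sand e3 is_id_U3k in hid.
  rewrite ew' noSS_sand in hns.
  rewrite ew' cU_sand in hcu; rewrite ew' cS_sand in hcs.
  apply: PrI => //; first lia.
  by apply: (@form_ff_I _ B) => //; rewrite ffE.
Qed.

Lemma head_Upow a x : 0 < a -> head LS (Upow a ++ x) = LU.
Proof. by case: a. Qed.

Lemma oneL (cond : nat -> bool) w : (forall a, cond a -> 0 < a) ->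
  form_one_side cond w -> head LS w == LU ->
  exists a B, [/\ cond a, B <> [::] & w = Upow a ++ core B].
Proof.
move=> hc /form_one_E [a [B [ca [hB [e|e]]]]]; first by exists a, B.
by rewrite e.
Qed.

Lemma oneR (cond : nat -> bool) w : (forall a, cond a -> 0 < a) ->
  form_one_side cond w -> head LS w != LU ->
  exists a B, [/\ cond a, B <> [::] & w = core B ++ Upow a].
Proof.
move=> hc /form_one_E [a [B [ca [hB [e|e]]]]].
  by rewrite e head_Upow ?hc.
by exists a, B; rewrite e oneRE.
Qed.

Lemma lead_L a B : lead (Upow a ++ core B) = a.
Proof. exact: lead_U. Qed.
Lemma trail_R a B : trail (core B ++ Upow a) = a.
Proof. by rewrite -oneRE -cat_cons trail_U. Qed.

Lemma is_id_R k v : is_identity (v ++ Upow (3 * k)) = is_identity v.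
Proof. by rewrite is_id_rot is_id_U3k. Qed.

Lemma c_sum n m : cnt form_c (3 * n) (2 * m) =
  2 * \sum_(1 <= k < n.+1) cnt form_a (3 * n - 3 * k) (2 * m).
Proof.
have hc : forall a, (0 < a) && (a %% 3 == 0) -> 0 < a by move=> a /andP [].
set s := \sum_(1 <= k < n.+1) _.
rewrite (_ : 2 * s = s + s); last by rewrite mul2n addnn.
rewrite /s cntE (@count_split _ (fun w => head LS w == LU)).
congr (_ + _).
- rewrite (@count_part _ (fun w => lead w %/ 3) 1 n.+1); last first.
    move=> w /andP [/[dup] Pw /PrE [_ _ hcu _ /oneL hL] /(hL hc) [a [B [/andP [a0 a3] hB ew]]]].
    move: hcu; rewrite ew lead_L cU_cat cU_Upow; move/eqP: a3; lia.
  apply: eq_big_nat => k /andP [k1 kn]; rewrite cntE.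
  apply: (@count_bij _ _ _ _ (fun v => Upow (3 * k) ++ v)).
  + by move=> w /andP [/andP [/Pr_size]].
  + by move=> v /Pr_size.
  + by move=> v1 v2 _ _ /catl_inj.
  + move=> v /[dup] Qv /PrE [hid hns hcu hcs /form_a_E [B' hB' ev]].
    set B := LU :: B' ++ [:: LU].
    have ev' : v = core B by rewrite ev aE.
    apply/andP; split; [apply/andP; split|].
    * apply: PrI.
      -- by rewrite ev'; case: (3 * k).
      -- by rewrite is_id_U3k.
      -- by rewrite noSS_Upow_cat.
      -- rewrite cU_cat cU_Upow hcu; lia.
      -- by rewrite cS_cat cS_Upow.
      -- rewrite ev'; apply: (@form_one_I1 _ _ (3 * k) B) => //.
         apply/andP; split; [lia | apply/eqP; lia].
    * by rewrite head_Upow //; lia.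
    * by rewrite ev' lead_L mulKn.
  + move=> w /andP [/andP [/[dup] Pw /PrE [_ _ _ _ /oneL hL] /(hL hc) [a [B [/andP [a0 a3] hB ew]]]] fk].
    move: fk; rewrite ew lead_L => /eqP fk.
    have ea : a = 3 * k by move/eqP: a3; lia.
    exists (core B); last by rewrite ea.
    case/PrE: Pw => hid hns hcu hcs _.
    rewrite ew ea is_id_U3k in hid.
    rewrite ew noSS_Upow_cat in hns.
    rewrite ew cU_cat cU_Upow in hcu; rewrite ew cS_cat cS_Upow in hcs.
    apply: PrI => //; first lia.
    have [B' hB' eB] := a_core hB hns hid.
    by apply: (@form_a_I _ B') => //; rewrite eB aE.
- rewrite (@count_part _ (fun w => trail w %/ 3) 1 n.+1); last first.
    move=> w /andP [/[dup] Pw /PrE [_ _ hcu _ /oneR hL] /(hL hc) [a [B [/andP [a0 a3] hB ew]]]].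
    move: hcu; rewrite ew trail_R cU_cat cU_Upow; move/eqP: a3; lia.
  apply: eq_big_nat => k /andP [k1 kn]; rewrite cntE.
  apply: (@count_bij _ _ _ _ (fun v => v ++ Upow (3 * k))).
  + by move=> w /andP [/andP [/Pr_size]].
  + by move=> v /Pr_size.
  + by move=> v1 v2 _ _ /catr_inj.
  + move=> v /[dup] Qv /PrE [hid hns hcu hcs /form_a_E [B' hB' ev]].
    set B := LU :: B' ++ [:: LU].
    have ev' : v = core B by rewrite ev aE.
    apply/andP; split; [apply/andP; split|].
    * apply: PrI.
      -- by rewrite ev'.
      -- by rewrite is_id_R.
      -- by rewrite noSS_cat_Upow.
      -- rewrite cU_cat cU_Upow hcu; lia.
      -- by rewrite cS_cat cS_Upow addn0.
      -- rewrite ev'; apply: (@form_one_I2 _ _ (3 * k) B) => //; last by rewrite oneRE.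
         apply/andP; split; [lia | apply/eqP; lia].
    * by rewrite ev'.
    * by rewrite ev' trail_R mulKn.
  + move=> w /andP [/andP [/[dup] Pw /PrE [_ _ _ _ /oneR hL] /(hL hc) [a [B [/andP [a0 a3] hB ew]]]] fk].
    move: fk; rewrite ew trail_R => /eqP fk.
    have ea : a = 3 * k by move/eqP: a3; lia.
    exists (core B); last by rewrite ea.
    case/PrE: Pw => hid hns hcu hcs _.
    rewrite ew ea is_id_R in hid.
    rewrite ew noSS_cat_Upow in hns.
    rewrite ew cU_cat cU_Upow in hcu; rewrite ew cS_cat cS_Upow in hcs.
    apply: PrI => //; first lia.
      lia.
    have [B' hB' eB] := a_core hB hns hid.
    by apply: (@form_a_I _ B') => //; rewrite eB aE.
Qed.

Lemma UpowS_cat a x : Upow a.+1 ++ x = Upow a ++ LU :: x.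
Proof. by rewrite UpowSr -catA. Qed.

Lemma cU_LU : cU [:: LU] = 1. Proof. by []. Qed.
Lemma cS_LU : cS [:: LU] = 0. Proof. by []. Qed.

Lemma f_sum n m : cnt form_f (3 * n) (2 * m) =
  2 * \sum_(0 <= k < n.+1) cnt form_frak_f (3 * n - 3 * k) (2 * m).
Proof.
have hc : forall a, a %% 3 == 1 -> 0 < a by move=> a /eqP; lia.
set s := \sum_(0 <= k < n.+1) _.
rewrite (_ : 2 * s = s + s); last by rewrite mul2n addnn.
rewrite /s cntE (@count_split _ (fun w => head LS w == LU)).
congr (_ + _).
- rewrite (@count_part _ (fun w => lead w %/ 3) 0 n.+1); last first.
    move=> w /andP [/[dup] Pw /PrE [_ _ hcu _ /oneL hL] /(hL hc) [a [B [a3 hB ew]]]].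
    move: hcu; rewrite ew lead_L cU_cat cU_Upow; move/eqP: a3; lia.
  apply: eq_big_nat => k /andP [k1 kn]; rewrite cntE.
  have hvE : forall B, Upow (3 * k) ++ rotr 1 (core B ++ [:: LU]) = Upow (3 * k + 1) ++ core B.
    by move=> B; rewrite cats1 rotr1_rcons addn1 UpowS_cat.
  apply: (@count_bij _ _ _ _ (fun v => Upow (3 * k) ++ rotr 1 v)).
  + by move=> w /andP [/andP [/Pr_size]].
  + by move=> v /Pr_size.
  + by move=> v1 v2 _ _ /catl_inj /rotr_inj.
  + move=> v /[dup] Qv /PrE [hid hns hcu hcs /form_ff_E [B hB ev]].
    have ev' : v = core B ++ [:: LU] by rewrite ev ffE.
    rewrite ev' in hid hns hcu hcs *; rewrite hvE.
    rewrite noSS_U in hns.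
    rewrite cU_cat cU_LU in hcu; rewrite cS_cat cS_LU addn0 in hcs.
    apply/andP; split; [apply/andP; split|].
    * apply: PrI.
      -- by case: (3 * k + 1).
      -- by rewrite -hvE is_id_U3k is_id_rotrn.
      -- by rewrite noSS_Upow_cat.
      -- rewrite cU_cat cU_Upow; lia.
      -- by rewrite cS_cat cS_Upow.
      -- apply: (@form_one_I1 _ _ (3 * k + 1) B) => //.
         apply/eqP; lia.
    * by rewrite head_Upow //; lia.
    * by rewrite lead_L; apply/eqP; lia.
  + move=> w /andP [/andP [/[dup] Pw /PrE [_ _ _ _ /oneL hL] /(hL hc) [a [B [a3 hB ew]]]] fk].
    move: fk; rewrite ew lead_L => /eqP fk.
    have ea : a = 3 * k + 1 by move/eqP: a3; lia.
    exists (core B ++ [:: LU]); last by rewrite hvE ea.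
    case/PrE: Pw => hid hns hcu hcs _.
    rewrite ew ea -hvE is_id_U3k is_id_rotrn in hid.
    rewrite ew noSS_Upow_cat in hns.
    rewrite ew cU_cat cU_Upow in hcu; rewrite ew cS_cat cS_Upow in hcs.
    apply: PrI => //.
    * by rewrite noSS_U.
    * rewrite cU_cat cU_LU; lia.
    * by rewrite cS_cat cS_LU addn0.
    * by apply: (@form_ff_I _ B) => //; rewrite ffE.
- rewrite (@count_part _ (fun w => trail w %/ 3) 0 n.+1); last first.
    move=> w /andP [/[dup] Pw /PrE [_ _ hcu _ /oneR hL] /(hL hc) [a [B [a3 hB ew]]]].
    move: hcu; rewrite ew trail_R cU_cat cU_Upow; move/eqP: a3; lia.
  apply: eq_big_nat => k /andP [k1 kn]; rewrite cntE.
  have hvE : forall B, (core B ++ [:: LU]) ++ Upow (3 * k) = core B ++ Upow (3 * k + 1).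
    by move=> B; rewrite -catA addn1.
  apply: (@count_bij _ _ _ _ (fun v => v ++ Upow (3 * k))).
  + by move=> w /andP [/andP [/Pr_size]].
  + by move=> v /Pr_size.
  + by move=> v1 v2 _ _ /catr_inj.
  + move=> v /[dup] Qv /PrE [hid hns hcu hcs /form_ff_E [B hB ev]].
    have ev' : v = core B ++ [:: LU] by rewrite ev ffE.
    apply/andP; split; [apply/andP; split|].
    * apply: PrI.
      -- by rewrite ev'.
      -- by rewrite is_id_R.
      -- by rewrite noSS_cat_Upow.
      -- rewrite cU_cat cU_Upow hcu; lia.
      -- by rewrite cS_cat cS_Upow addn0.
      -- rewrite ev' hvE; apply: (@form_one_I2 _ _ (3 * k + 1) B) => //; last by rewrite oneRE.
         apply/eqP; lia.
    * by rewrite ev'.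
    * by rewrite ev' hvE trail_R; apply/eqP; lia.
  + move=> w /andP [/andP [/[dup] Pw /PrE [_ _ _ _ /oneR hL] /(hL hc) [a [B [a3 hB ew]]]] fk].
    move: fk; rewrite ew trail_R => /eqP fk.
    have ea : a = 3 * k + 1 by move/eqP: a3; lia.
    exists (core B ++ [:: LU]); last by rewrite hvE ea.
    case/PrE: Pw => hid hns hcu hcs _.
    rewrite ew ea -hvE is_id_R in hid.
    rewrite ew noSS_cat_Upow in hns.
    rewrite ew cU_cat cU_Upow in hcu; rewrite ew cS_cat cS_Upow in hcs.
    apply: PrI => //.
    * by rewrite noSS_U.
    * rewrite cU_cat cU_LU; lia.
    * by rewrite cS_cat cS_LU addn0 -(addn0 (cS (core B))).
    * by apply: (@form_ff_I _ B) => //; rewrite ffE.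
Qed.

Lemma cU_fd B : cU (LU :: core B ++ [:: LU]) = (cU (core B)).+2.
Proof. rewrite /cU /= count_cat /=; lia. Qed.
Lemma cS_fd B : cS (LU :: core B ++ [:: LU]) = cS (core B).
Proof. rewrite /cS /= count_cat /=; lia. Qed.
Lemma noSS_fd B : noSS (LU :: core B ++ [:: LU]) = noSS (core B).
Proof. change (noSS (core B ++ [:: LU]) = noSS (core B)); exact: noSS_U. Qed.

Lemma g_sum n m : cnt form_g (3 * n) (2 * m) =
  2 * \sum_(0 <= k < n.+1) cnt form_frak_d (3 * n - 3 * k) (2 * m).
Proof.
have hc : forall a, a %% 3 == 2 -> 0 < a by move=> a /eqP; lia.
set s := \sum_(0 <= k < n.+1) _.
rewrite (_ : 2 * s = s + s); last by rewrite mul2n addnn.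
rewrite /s cntE (@count_split _ (fun w => head LS w == LU)).
congr (_ + _).
- rewrite (@count_part _ (fun w => lead w %/ 3) 0 n.+1); last first.
    move=> w /andP [/[dup] Pw /PrE [_ _ hcu _ /oneL hL] /(hL hc) [a [B [a3 hB ew]]]].
    move: hcu; rewrite ew lead_L cU_cat cU_Upow; move/eqP: a3; lia.
  apply: eq_big_nat => k /andP [k1 kn]; rewrite cntE.
  have hvE : forall B, Upow (3 * k) ++ rotr 1 (LU :: core B ++ [:: LU]) = Upow (3 * k + 2) ++ core B.
    by move=> B; rewrite -cat_cons cats1 rotr1_rcons addn2 !UpowS_cat.
  apply: (@count_bij _ _ _ _ (fun v => Upow (3 * k) ++ rotr 1 v)).
  + by move=> w /andP [/andP [/Pr_size]].
  + by move=> v /Pr_size.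
  + by move=> v1 v2 _ _ /catl_inj /rotr_inj.
  + move=> v /[dup] Qv /PrE [hid hns hcu hcs /form_fd_E [B hB ev]].
    have ev' : v = LU :: core B ++ [:: LU] by rewrite ev fdE.
    rewrite ev' in hid hns hcu hcs *; rewrite hvE.
    rewrite noSS_fd in hns.
    rewrite cU_fd in hcu; rewrite cS_fd in hcs.
    apply/andP; split; [apply/andP; split|].
    * apply: PrI.
      -- by case: (3 * k + 2).
      -- by rewrite -hvE is_id_U3k is_id_rotrn.
      -- by rewrite noSS_Upow_cat.
      -- rewrite cU_cat cU_Upow; lia.
      -- by rewrite cS_cat cS_Upow.
      -- apply: (@form_one_I1 _ _ (3 * k + 2) B) => //.
         apply/eqP; lia.
    * by rewrite head_Upow //; lia.
    * by rewrite lead_L; apply/eqP; lia.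
  + move=> w /andP [/andP [/[dup] Pw /PrE [_ _ _ _ /oneL hL] /(hL hc) [a [B [a3 hB ew]]]] fk].
    move: fk; rewrite ew lead_L => /eqP fk.
    have ea : a = 3 * k + 2 by move/eqP: a3; lia.
    exists (LU :: core B ++ [:: LU]); last by rewrite hvE ea.
    case/PrE: Pw => hid hns hcu hcs _.
    rewrite ew ea -hvE is_id_U3k is_id_rotrn in hid.
    rewrite ew noSS_Upow_cat in hns.
    rewrite ew cU_cat cU_Upow in hcu; rewrite ew cS_cat cS_Upow in hcs.
    apply: PrI => //.
    * by rewrite noSS_fd.
    * rewrite cU_fd; lia.
    * by rewrite cS_fd.
    * by apply: (@form_fd_I _ B) => //; rewrite fdE.
- rewrite (@count_part _ (fun w => trail w %/ 3) 0 n.+1); last first.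
    move=> w /andP [/[dup] Pw /PrE [_ _ hcu _ /oneR hL] /(hL hc) [a [B [a3 hB ew]]]].
    move: hcu; rewrite ew trail_R cU_cat cU_Upow; move/eqP: a3; lia.
  apply: eq_big_nat => k /andP [k1 kn]; rewrite cntE.
  have hvE : forall B, rot 1 (LU :: core B ++ [:: LU]) ++ Upow (3 * k) = core B ++ Upow (3 * k + 2).
    by move=> B; rewrite rot1_cons -cats1 -!catA addn2.
  apply: (@count_bij _ _ _ _ (fun v => rot 1 v ++ Upow (3 * k))).
  + by move=> w /andP [/andP [/Pr_size]].
  + by move=> v /Pr_size.
  + by move=> v1 v2 _ _ /catr_inj /rot_inj.
  + move=> v /[dup] Qv /PrE [hid hns hcu hcs /form_fd_E [B hB ev]].
    have ev' : v = LU :: core B ++ [:: LU] by rewrite ev fdE.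
    rewrite ev' in hid hns hcu hcs *; rewrite hvE.
    rewrite noSS_fd in hns.
    rewrite cU_fd in hcu; rewrite cS_fd in hcs.
    apply/andP; split; [apply/andP; split|].
    * apply: PrI.
      -- by [].
      -- by rewrite -hvE is_id_R is_id_rotn.
      -- by rewrite noSS_cat_Upow.
      -- rewrite cU_cat cU_Upow; lia.
      -- by rewrite cS_cat cS_Upow addn0.
      -- apply: (@form_one_I2 _ _ (3 * k + 2) B) => //; last by rewrite oneRE.
         apply/eqP; lia.
    * by [].
    * by rewrite trail_R; apply/eqP; lia.
  + move=> w /andP [/andP [/[dup] Pw /PrE [_ _ _ _ /oneR hL] /(hL hc) [a [B [a3 hB ew]]]] fk].
    move: fk; rewrite ew trail_R => /eqP fk.
    have ea : a = 3 * k + 2 by move/eqP: a3; lia.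
    exists (LU :: core B ++ [:: LU]); last by rewrite hvE ea.
    case/PrE: Pw => hid hns hcu hcs _.
    rewrite ew ea -hvE is_id_R is_id_rotn in hid.
    rewrite ew noSS_cat_Upow in hns.
    rewrite ew cU_cat cU_Upow in hcu; rewrite ew cS_cat cS_Upow addn0 in hcs.
    apply: PrI => //.
    * by rewrite noSS_fd.
    * rewrite cU_fd; lia.
    * by rewrite cS_fd.
    * by apply: (@form_fd_I _ B) => //; rewrite fdE.
Qed.

Definition form_UU (w : word) := framed [:: LU] [:: LU] w.

Lemma Pr_form (f1 f2 : word -> bool) n m v : Pr f1 n m v -> f2 v -> Pr f2 n m v.
Proof. by case/and4P => h1 h2 h3 _ h4; rewrite /Pr h1 h2 h3 h4. Qed.

Lemma is_id_core v : is_identity (core v) = is_identity v.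
Proof. by rewrite /core -cat1s is_id_rot -catA is_id_SS. Qed.

Lemma UU_of_UBU a B b : 0 < a -> 0 < b -> form_UU (Upow a ++ core B ++ Upow b).
Proof.
case: a => // a; case: b => // b _ _; apply/framedP.
exists (Upow a ++ core B ++ Upow b); split; first by case: a.
by rewrite (UpowSr b) -!catA.
Qed.

Lemma UU_struct n m v : Pr form_UU n (2 * m) v ->
  (exists a b B, [/\ 0 < a, 0 < b, B <> [::] & v = Upow a ++ core B ++ Upow b]) \/
  (exists g, [/\ 3 <= g, g %% 3 = 0 & v = Upow g]).
Proof.
move=> /PrE [hid hns hcu hcs /framedP [B0 [hB0 ev]]].
case: (boolP (LS \in v)) => hS.
- left.
  have h2 : 1 < cS v by move: hS; rewrite inS_cS hcs; lia.
  have [a [b [B [hB e]]]] := decomp h2 hns.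
  exists a, b, B; split => //; last by rewrite e UBUE.
  + case: a e => // e; move: ev; rewrite e /=; by [].
  + case: b e => // e; move: ev; rewrite e => /(congr1 (last LU)).
    by rewrite /= !last_cat /= last_cat.
- right; have e := noS hS; exists (size v).
  have hs : 0 < size B0 by rewrite lt0n; apply/eqP => /size0nil; exact: hB0.
  have s3 : 3 <= size v by rewrite ev /= size_cat /=; lia.
  split => //.
  have : is_identity (Upow (size v)) by rewrite -e.
  rewrite -[Upow _]cats0 is_id_mod.
  have : size v %% 3 < 3 by rewrite ltn_pmod.
  by case: (size v %% 3) => [|[|[|]]] //; rewrite ?nid_U ?nid_UU.
Qed.

Lemma class_gen (fx : word -> bool) (cond : nat -> nat -> bool) r n m v :
  (forall w, fx w -> (exists a b B,
     [/\ 0 < a, 0 < b, (a + b) %% 3 == r, B <> [::] & w = Upow a ++ core B ++ Upow b])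
     \/ exists g, [/\ 0 < g, g %% 3 = 0, r = 0 & w = Upow g]) ->
  (forall a b B, 0 < a -> 0 < b -> (a + b) %% 3 == r -> B <> [::] -> fx (Upow a ++ core B ++ Upow b)) ->
  (forall g, 0 < g -> g %% 3 = 0 -> r = 0 -> fx (Upow g)) ->
  (Pr form_UU n (2 * m) v && ((lead v + trail v) %% 3 == r)) = Pr fx n (2 * m) v.
Proof.
move=> hE hI1 hI2; apply/idP/idP.
- case/andP => Pv hf; apply: (Pr_form Pv).
  case: (UU_struct Pv) => [[a [b [B [ha hb hB ev]]]]|[g [g3 gm ev]]].
  + by move: hf; rewrite ev lead_sand trail_sand; move=> hf; exact: hI1.
  + move: hf; rewrite ev lead_pure trail_pure => /eqP hf.
    by apply: hI2 => //; [lia | move: hf gm; lia].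
- move=> Pv; case/and4P: (Pv) => _ _ _ /hE.
  case=> [[a [b [B [ha hb hc hB ev]]]]|[g [g0 gm hr ev]]].
  + by rewrite (Pr_form Pv) ?ev ?UU_of_UBU //= lead_sand trail_sand.
  + rewrite (Pr_form (f2 := form_UU) Pv) /=; last first.
      rewrite ev; apply/framedP; exists (Upow (g - 2)); split.
        have : 0 < g - 2 by move: gm g0; lia.
        by case: (g - 2).
      have eg : g = (g - 2).+2 by move: gm g0; lia.
      by rewrite {1}eg UpowSr.
    by rewrite ev lead_pure trail_pure hr; apply/eqP; lia.
Qed.

Lemma noSS_coreU B : noSS (core (LU :: B ++ [:: LU])) = noSS (LU :: B ++ [:: LU]).
Proof.
change (noSS ((B ++ [:: LU]) ++ [:: LS]) = noSS (B ++ [:: LU])).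
by rewrite -catA /= !noSS_catU.
Qed.

Lemma UBU_I' (cond : nat -> nat -> bool) a b B : 0 < a -> 0 < b -> cond a b -> B <> [::] ->
  form_UBU cond (Upow a ++ core B ++ Upow b).
Proof. by move=> *; apply: (@form_UBU_I _ _ a b B) => //; rewrite UBUE. Qed.

Lemma a_rel n m : cnt form_a (3 * n) (2 * m + 2) =
  cnt form_b (3 * n) (2 * m) + cnt form_d (3 * n) (2 * m) + cnt form_e (3 * n) (2 * m).
Proof.
rewrite !cntE.
have -> : count (Pr form_a (3 * n) (2 * m + 2)) (allw (3 * n + (2 * m + 2))) =
          count (Pr form_UU (3 * n) (2 * m)) (allw (3 * n + 2 * m)).
  apply: (@count_bij _ _ _ _ core).
  - by move=> w /Pr_size.
  - by move=> v /Pr_size.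
  - by move=> v1 v2 _ _ [] /catr_inj.
  - move=> v /PrE [hid hns hcu hcs /framedP [B [hB ev]]].
    apply: PrI.
    + exact: core_nil.
    + by rewrite is_id_core.
    + by move: hns; rewrite ev cat1s noSS_coreU.
    + by rewrite cU_core.
    + rewrite cS_core hcs; lia.
    + by rewrite ev cat1s; apply: (@form_a_I _ B) => //; rewrite aE.
  - move=> w /[dup] Pw /PrE [hid hns hcu hcs /form_a_E [B hB ew]].
    rewrite aE in ew; exists (LU :: B ++ [:: LU]) => //.
    rewrite ew in hid hns hcu hcs.
    apply: PrI => //.
    + by rewrite -is_id_core.
    + by rewrite -noSS_coreU.
    + by rewrite -cU_core.
    + move: hcs; rewrite cS_core; lia.
    + by apply/framedP; exists B.
rewrite (@count_part _ (fun v => (lead v + trail v) %% 3) 0 3); last first.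
  by move=> w _; rewrite ltn_pmod.
rewrite big_ltn // big_ltn // big_ltn // big_geq // addn0.
have E0 : count (fun w => Pr form_UU (3 * n) (2 * m) w && ((lead w + trail w) %% 3 == 0))
    (allw (3 * n + 2 * m)) = count (Pr form_b (3 * n) (2 * m)) (allw (3 * n + 2 * m)).
  apply: eq_count => v /=; apply: (@class_gen form_b (fun _ _ => true) 0 (3 * n) m v).
  - move=> w /orP [/UBU_of [a [b [B [ha hb hc hB e]]]]|/form_b_pure_E [g [g0 gm e]]].
    + by left; exists a, b, B.
    + by right; exists g.
  - by move=> a b B ha hb hc hB; apply/orP; left; apply: UBU_I'.
  - by move=> g g0 gm _; apply/orP; right; apply: (@form_b_pure_I (Upow g) g).
have E1 : count (fun w => Pr form_UU (3 * n) (2 * m) w && ((lead w + trail w) %% 3 == 1))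
    (allw (3 * n + 2 * m)) = count (Pr form_e (3 * n) (2 * m)) (allw (3 * n + 2 * m)).
  apply: eq_count => v /=; apply: (@class_gen form_e (fun _ _ => true) 1 (3 * n) m v).
  - move=> w /UBU_of [a [b [B [ha hb hc hB e]]]].
    by left; exists a, b, B.
  - by move=> a b B ha hb hc hB; apply: UBU_I'.
  - by [].
have E2 : count (fun w => Pr form_UU (3 * n) (2 * m) w && ((lead w + trail w) %% 3 == 2))
    (allw (3 * n + 2 * m)) = count (Pr form_d (3 * n) (2 * m)) (allw (3 * n + 2 * m)).
  apply: eq_count => v /=; apply: (@class_gen form_d (fun _ _ => true) 2 (3 * n) m v).
  - move=> w /UBU_of [a [b [B [ha hb hc hB e]]]].
    by left; exists a, b, B.
  - by move=> a b B ha hb hc hB; apply: UBU_I'.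
  - by [].
rewrite E0 E1 E2; lia.
Qed.

Lemma b_zero n : 0 < n -> cnt form_b (3 * n) 0 = 1.
Proof.
move=> n0; rewrite cntE addn0.
rewrite (eq_count (a2 := pred1 (Upow (3 * n)))).
  rewrite count_uniq_mem; last exact: allw_uniq.
  by rewrite mem_allw size_Upow eqxx.
move=> w; apply/idP/eqP.
- case/PrE => _ _ hcu hcs _.
  have hS : LS \notin w by rewrite inS_cS hcs.
  by rewrite (noS hS) size_cnt hcu hcs addn0.
- move=> ->; apply: PrI.
  + have : 0 < 3 * n by lia.
    by case: (3 * n).
  + by rewrite -[Upow _]cats0 is_id_U3k id_nil.
  + exact: noSS_Upow.
  + exact: cU_Upow.
  + exact: cS_Upow.
  + apply/orP; right; apply: (@form_b_pure_I _ (3 * n)) => //; lia.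
Qed.

Lemma extsub (F : nat -> nat -> nat) n k m : k <= n ->
  ext F (Posz (3 * n) - Posz (3 * k)%N)%R (Posz (2 * m)) = F (3 * n - 3 * k) (2 * m).
Proof. by move=> kn; rewrite subzn //; lia. Qed.

Lemma Mminus2 m : (Posz (2 * m.+1) - 2)%R = Posz (2 * m).
Proof. by rewrite mulnS PoszD addrC addKr. Qed.

Unset Implicit Arguments.
Theorem proposition3 (n m : nat) :
  let N : int := Posz (3 * n) in
  let M : int := Posz (2 * m) in
  a_ N M = b_ N (M - 2)%R + d_ N (M - 2)%R + e_ N (M - 2)%R /\
  (0 < m -> b_ N M = \sum_(1 <= k < n.+1) (3 * k - 1) * a_ (N - Posz (3 * k)%N)%R M) /\
  (0 < n -> b_ N 0 = 1) /\
  c_ N M = 2 * \sum_(1 <= k < n.+1) a_ (N - Posz (3 * k)%N)%R M /\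
  d_ N M = \sum_(0 <= k < n.+1) (3 * k + 1) * fd_ (N - Posz (3 * k)%N)%R M /\
  e_ N M = \sum_(1 <= k < n.+1) (3 * k) * ff_ (N - Posz (3 * k)%N)%R M /\
  f_ N M = 2 * \sum_(0 <= k < n.+1) ff_ (N - Posz (3 * k)%N)%R M /\
  g_ N M = 2 * \sum_(0 <= k < n.+1) fd_ (N - Posz (3 * k)%N)%R M.
Proof.
move=> N M; rewrite /N /M; clear N M; rewrite /a_ /b_ /c_ /d_ /e_ /f_ /g_ /fd_ /ff_.
split; [|split; [|split; [|split; [|split; [|split; [|split]]]]]].
- case: m => [|m'].
  + rewrite /= cntE count_0 // => w; apply/negP => /PrE [_ _ _ hcs /form_a_E [B _ ew]].
    by move: hcs; rewrite ew /cS /= count_cat /=; lia.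
  + by rewrite Mminus2 /= -a_rel; congr cnt; lia.
- move=> m0; rewrite /= b_sum //; apply: eq_big_nat => k /andP [_ kn].
  by rewrite extsub.
- by move=> n0; rewrite /= b_zero.
- rewrite /= c_sum; congr (_ * _); apply: eq_big_nat => k /andP [_ kn].
  by rewrite extsub.
- rewrite /= d_sum; apply: eq_big_nat => k /andP [_ kn].
  by rewrite extsub.
- rewrite /= e_sum; apply: eq_big_nat => k /andP [_ kn].
  by rewrite extsub.
- rewrite /= f_sum; congr (_ * _); apply: eq_big_nat => k /andP [_ kn].
  by rewrite extsub.
- rewrite /= g_sum; congr (_ * _); apply: eq_big_nat => k /andP [_ kn].
  by rewrite extsub.
Qed.
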